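(* Let $G$ be a finite group. Then $G/[\epsilon_i,G]$ is a nested GVZ-group for every integer $i\ge 1$. Moreover, $G$ is a nested GVZ-group if and only if $\epsilon_\infty=1$.
   Context: All groups are finite. For $\chi\in\mathrm{Irr}(G)$, the center of $\chi$ is $Z(\chi)=\{g\in G : |\chi(g)|=\chi(1)\}$. A group is nested if for any two of its irreducible characters $\chi,\psi$ either $Z(\chi)\le Z(\psi)$ or $Z(\psi)\le Z(\chi)$. A group is a GVZ-group if every irreducible character vanishes on the complement of its center. For a normal subgroup $N$ of $G$, $\mathrm{Irr}(G\mid N)$ is the set of $\chi\in\mathrm{Irr}(G)$ with $N\not\le\ker(\chi)$, and $V(G\mid N)$ is the subgroup generated by all $g\in G$ such that $\chi(g)\neq0$ for some $\chi\in\mathrm{Irr}(G\mid N)$ (so $V(G\mid 1)=1$). Define $\epsilon_1=G$ and $\epsilon_{i+1}=V(G\mid[\epsilon_i,G])$ for $i\ge1$. This is a descending chain of normal subgroups which stabilizes; $\epsilon_\infty$ denotes its terminal term. *)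

(* Defs.v *)
From mathcomp Require Import all_boot all_order all_algebra all_fingroup all_solvable all_field all_character.
Set Implicit Arguments. Unset Strict Implicit. Unset Printing Implicit Defensive.
Import GRing.Theory Num.Theory.
Local Open Scope ring_scope.

Definition nested (gT : finGroupType) (G : {group gT}) : Prop :=
  forall i j : Iirr G,
    ('Z('chi_i)%CF \subset 'Z('chi_j)%CF) \/ ('Z('chi_j)%CF \subset 'Z('chi_i)%CF).

Definition GVZ (gT : finGroupType) (G : {group gT}) : Prop :=
  forall (i : Iirr G) (g : gT), g \in G -> g \notin 'Z('chi_i)%CF -> 'chi_i g = 0%R.

(* V(G | N): subgroup generated by the g in G on which some chi in Irr(G|N)
   (i.e. with N not contained in ker chi) does not vanish. *)
Definition Vgrp (gT : finGroupType) (G : {group gT}) (N : {set gT}) : {set gT} :=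
  (<<[set g in G | [exists i : Iirr G, ~~ (N \subset cfker 'chi_i) && ('chi_i g != 0%R)]]>>)%g.

(* eps_rec G n is the paper's epsilon_{n+1}. *)
Fixpoint eps_rec (gT : finGroupType) (G : {group gT}) (n : nat) : {set gT} :=
  match n with
  | 0 => G
  | m.+1 => Vgrp G [~: eps_rec G m, G]%g
  end.

Definition epsilon (gT : finGroupType) (G : {group gT}) (i : nat) : {set gT} :=
  eps_rec G i.-1.

(* Terminal term of the (descending, eventually constant) chain: the chain
   is constant from index #|G|.+1 on. *)
Definition eps_infty (gT : finGroupType) (G : {group gT}) : {set gT} :=
  epsilon G #|G|.+1%N.

(* Main.v *)
Require Import Defs.
From mathcomp Require Import all_boot all_order all_algebra all_fingroup all_solvable all_field all_character.
Set Implicit Arguments. Unset Strict Implicit. Unset Printing Implicit Defensive.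
Import GroupScope.
Import GRing.Theory Num.Theory.

Section Helpers.
Variables (gT : finGroupType) (G : {group gT}).

Lemma Vgrp_sub N : Vgrp G N \subset G.
Proof. by rewrite /Vgrp gen_subG; apply/subsetP=> g; rewrite inE => /andP[]. Qed.

Lemma eps_group_set n : group_set (eps_rec G n).
Proof. by case: n => [|n] /=; apply: groupP. Qed.
Canonical eps_group n := Group (eps_group_set n).

Lemma eps_sub n : eps_rec G n \subset G.
Proof. by case: n => [|n] //=; apply: Vgrp_sub. Qed.

Lemma Vgrp_anti (N M : {set gT}) : N \subset M -> Vgrp G N \subset Vgrp G M.
Proof.
move=> sNM; rewrite /Vgrp genS //; apply/subsetP=> g; rewrite !inE.
case/andP=> -> /existsP[i /andP[nN nz]]; apply/existsP; exists i; rewrite nz andbT.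
by apply: contra nN; apply: subset_trans.
Qed.

Lemma eps_decr n : eps_rec G n.+1 \subset eps_rec G n.
Proof.
elim: n => [|n IH]; first exact: Vgrp_sub.
by rewrite [eps_rec G n.+2]/= Vgrp_anti // commSg.
Qed.

Lemma eps_chain m n : m <= n -> eps_rec G n \subset eps_rec G m.
Proof.
move/subnK <-; elim: (n - m) => [|k IH] //; rewrite addSn.
exact: subset_trans (eps_decr _) IH.
Qed.

Lemma eps_stable k j : eps_rec G k.+1 = eps_rec G k -> eps_rec G (j + k) = eps_rec G k.
Proof.
move=> st; elim: j => [|j IH] //; rewrite addSn.
have -> : eps_rec G (j + k).+1 = Vgrp G [~: eps_rec G (j + k), G] by [].
by rewrite IH.
Qed.
End Helpers.
Section Stab.
Variables (gT : finGroupType) (G : {group gT}).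

Lemma card_bound k : (exists2 j, j < k & eps_rec G j.+1 = eps_rec G j) \/ #|eps_rec G k| + k <= #|G|.
Proof.
elim: k => [|k [[j ltjk st]|IH]]; first by right; rewrite addn0 subset_leq_card // eps_sub.
- by left; exists j => //; apply: ltnW.
have [e|ne] := eqVneq (eps_rec G k.+1) (eps_rec G k); first by left; exists k.
right; have: eps_rec G k.+1 \proper eps_rec G k by rewrite properEneq ne eps_decr.
move/proper_card => lt; rewrite addnS; apply: leq_trans IH; by rewrite ltn_add2r.
Qed.

Lemma eps_final : eps_rec G #|G|.+1 = eps_rec G #|G|.
Proof.
case: (card_bound #|G|.+1) => [[j ltj st]|]; last by rewrite addnS ltnNge leq_addl.
have h1 := eps_stable (#|G| - j) st.
have h2 := eps_stable (#|G|.+1 - j) st.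
rewrite subnK // in h1.
rewrite subnK ?(ltnW ltj) // in h2.
by rewrite h2 h1.
Qed.
End Stab.

Section Chars.
Variables (gT : finGroupType) (G : {group gT}).
Local Open Scope ring_scope.

Lemma center_nz (i : Iirr G) g : g \in 'Z('chi_i)%CF -> 'chi_i g != 0.
Proof.
move=> Zg; have Gg := subsetP (cfcenter_sub 'chi_i) g Zg.
move: Zg; rewrite irr_cfcenterE // => /eqP e; apply: contraNneq (irr1_neq0 i).
by move=> z; rewrite -e z normr0.
Qed.

Lemma sub_center (i : Iirr G) (E : {set gT}) :
  E \subset G -> ([~: E, G] \subset cfker 'chi_i)%g -> E \subset 'Z('chi_i)%CF.
Proof.
move=> sEG sC.
have nKG := normal_norm (cfker_normal 'chi_i).
have sKZ := normal_sub (cfker_center_normal 'chi_i).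
rewrite -(quotientSGK (subset_trans sEG nKG) sKZ) cfcenter_eq_center.
by rewrite subsetI quotientS // quotient_cents2r.
Qed.

Lemma center_comm (i : Iirr G) : ([~: 'Z('chi_i)%CF, G] \subset cfker 'chi_i)%g.
Proof.
have nKG := normal_norm (cfker_normal 'chi_i).
rewrite -quotient_cents2 ?(subset_trans (cfcenter_sub _)) //.
by rewrite cfcenter_eq_center subsetIr.
Qed.
End Chars.
Section Main.
Variables (gT : finGroupType) (G : {group gT}).
Local Open Scope ring_scope.

Lemma keyQ n (i : Iirr G) : ([~: eps_rec G n, G] \subset cfker 'chi_i)%g ->
  (forall g, g \in G -> g \notin 'Z('chi_i)%CF -> 'chi_i g = 0) /\
  exists2 m, (m <= n)%N & 'Z('chi_i)%CF = eps_rec G m.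
Proof.
elim: n i => [|n IH] i H.
  have sG : (G : {set gT}) \subset 'Z('chi_i)%CF by apply: sub_center.
  have eZ : 'Z('chi_i)%CF = G by apply/eqP; rewrite eqEsubset cfcenter_sub.
  split; last by exists 0%N.
  by move=> g Gg; rewrite (subsetP sG).
have [h|h] := boolP ([~: eps_rec G n, G] \subset cfker 'chi_i)%g.
  have [IH1 [m le e]] := IH i h; split => //; exists m => //; exact: leqW.
have hV : eps_rec G n.+1 \subset 'Z('chi_i)%CF by apply: sub_center (eps_sub _ _) H.
have supp : forall g, g \in G -> 'chi_i g != 0 -> g \in eps_rec G n.+1.
  move=> g Gg nz; rewrite /= /Vgrp; apply: mem_gen; rewrite inE Gg /=.
  by apply/existsP; exists i; rewrite h nz.
split.
  move=> g Gg nZ; apply/eqP; apply: contraNT nZ => nz.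
  exact: (subsetP hV _ (supp g Gg nz)).
exists n.+1 => //; apply/eqP; rewrite eqEsubset hV andbT.
apply/subsetP => g Zg; exact: supp (subsetP (cfcenter_sub _) g Zg) (center_nz Zg).
Qed.
End Main.
Section Quo.
Variables (gT : finGroupType) (G N : {group gT}).
Hypothesis nN : N <| G.
Local Open Scope ring_scope.

Lemma lift_quo y : y \in (G / N)%g -> exists2 x, x \in G & y = coset N x.
Proof. by case/morphimP=> x _ Gx ->; exists x. Qed.

Lemma modZ (j : Iirr (G / N)) x : x \in G ->
  (x \in 'Z('chi_(mod_Iirr j))%CF) = (coset N x \in 'Z('chi_j)%CF).
Proof.
move=> Gx; rewrite irr_cfcenterE // irr_cfcenterE ?mem_quotient //.
by rewrite mod_IirrE // cfModE // cfMod1.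
Qed.

Lemma mod_ker (j : Iirr (G / N)) : N \subset cfker 'chi_(mod_Iirr j).
Proof. by rewrite mod_IirrE // cfker_mod. Qed.

Lemma nested_quo :
  (forall a b : Iirr G, N \subset cfker 'chi_a -> N \subset cfker 'chi_b ->
     ('Z('chi_a)%CF \subset 'Z('chi_b)%CF) \/ ('Z('chi_b)%CF \subset 'Z('chi_a)%CF)) ->
  nested (G / N)%G.
Proof.
move=> H j k.
have tr : forall a b : Iirr (G / N),
  'Z('chi_(mod_Iirr a))%CF \subset 'Z('chi_(mod_Iirr b))%CF ->
  'Z('chi_a)%CF \subset 'Z('chi_b)%CF.
  move=> a b sab; apply/subsetP=> y Zy.
  have Gy : y \in (G / N)%g := subsetP (cfcenter_sub _) y Zy.
  have [x Gx ey] := lift_quo Gy.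
  rewrite ey -modZ //; rewrite ey -modZ // in Zy.
  exact: (subsetP sab).
by case: (H _ _ (mod_ker j) (mod_ker k)) => s; [left|right]; exact: tr.
Qed.

Lemma GVZ_quo :
  (forall (a : Iirr G) g, N \subset cfker 'chi_a -> g \in G ->
     g \notin 'Z('chi_a)%CF -> 'chi_a g = 0) ->
  GVZ (G / N)%G.
Proof.
move=> H j y Gy nZ.
have [x Gx ey] := lift_quo Gy.
rewrite ey -modZ // in nZ.
by rewrite ey -(cfModE _ nN Gx) -mod_IirrE // H // mod_ker.
Qed.
End Quo.
Section Final.
Variables (gT : finGroupType) (G : {group gT}).
Local Open Scope ring_scope.

Lemma nestQ n (a b : Iirr G) :
  ([~: eps_rec G n, G] \subset cfker 'chi_a)%g -> ([~: eps_rec G n, G] \subset cfker 'chi_b)%g ->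
  ('Z('chi_a)%CF \subset 'Z('chi_b)%CF) \/ ('Z('chi_b)%CF \subset 'Z('chi_a)%CF).
Proof.
move=> ha hb; have [_ [m1 _ ->]] := keyQ ha; have [_ [m2 _ ->]] := keyQ hb.
by case: (leqP m1 m2) => h; [right|left]; apply: eps_chain => //; apply: ltnW.
Qed.

Lemma comm_normal n : [~: eps_rec G n, G]%g <| G.
Proof.
rewrite /normal commg_normr andbT.
have := commg_subr (eps_group G n) G; rewrite /= => ->.
exact: subset_trans (eps_sub G n) (normG G).
Qed.

Lemma to_one : nested G -> GVZ G -> eps_rec G #|G| = 1%g.
Proof.
move=> nest gvz; set E := eps_rec G #|G|.
have P0 : forall i : Iirr G, ([~: E, G] \subset cfker 'chi_i)%g.
  move=> i0; apply/negPn/negP => Pi0.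
  pose P := fun i : Iirr G => ~~ ([~: E, G] \subset cfker 'chi_i)%g.
  have [i1 Pi1 mx] := @arg_maxnP _ i0 P (fun i => #|'Z('chi_i)%CF|) Pi0.
  have allsub : forall j, P j -> 'Z('chi_j)%CF \subset 'Z('chi_i1)%CF.
    move=> j Pj; case: (nest j i1) => // s.
    have le := mx j Pj.
    have /eqP <- : 'Z('chi_i1)%CF == 'Z('chi_j)%CF by rewrite eqEcard s; exact: le.
    exact: subxx.
  have sE : E \subset 'Z('chi_i1)%CF.
    rewrite /E -eps_final /= /Vgrp gen_subG; apply/subsetP => g.
    rewrite inE => /andP[Gg /existsP[j /andP[Pj nz]]].
    apply: (subsetP (allsub j Pj)); apply: contraR nz => nZ; apply/eqP; exact: gvz.
  move/negP: Pi1; apply; exact: subset_trans (commSg G sE) (center_comm i1).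
rewrite /E -eps_final /= /Vgrp; apply/trivgP; rewrite gen_subG.
apply/subsetP => g; rewrite inE => /andP[_ /existsP[j /andP[Pj _]]].
by rewrite P0 in Pj.
Qed.
End Final.

Theorem theoremJ (gT : finGroupType) (G : {group gT}) :
  (forall i : nat, 1 <= i ->
     nested (G / [~: epsilon G i, G])%G /\ GVZ (G / [~: epsilon G i, G])%G) /\
  ((nested G /\ GVZ G) <-> eps_infty G = 1).
Proof.
split.
  move=> i _; rewrite /epsilon; have nN := comm_normal G i.-1.
  split.
    apply: nested_quo => // a b ha hb; exact: nestQ ha hb.
  apply: GVZ_quo => // a g ha; have [h _] := keyQ ha; exact: h.
rewrite /eps_infty /epsilon /=; split.
  by case=> n g; apply: to_one.
move=> e1.
have hk : forall a : Iirr G, ([~: eps_rec G #|G|, G] \subset cfker ('chi_a)%R)%g.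
  by move=> a; rewrite e1 comm1G sub1G.
split.
  move=> a b; exact: nestQ (hk a) (hk b).
move=> a g; have [h _] := keyQ (hk a); exact: h.
Qed.
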